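(* Let $\mathcal{A}$ be a finite alphabet, $\Omega=\mathcal{A}^{\mathbb{N}}$, and $\mu$ a Borel probability measure on $\Omega$ (not necessarily shift-invariant). For every recursive reversible coding procedure $Z:\mathcal{A}^*\to\{0,1\}^*$ and every real $q>0$, $$h^q_Z(\Omega)\ge h^q_{AIC}(\Omega).$$
   Context: For $\omega\in\Omega$, $\omega^n$ is the string of its first $n$ symbols. A recursive reversible coding procedure is an injective recursive map $Z:\mathcal{A}^*\to\{0,1\}^*$, and $I_Z(s)=|Z(s)|$. $AIC(s)=\min\{|P|:C(P)=s\}$ for a fixed universal computing machine $C$. For an information function $I\in\{AIC,I_Z\}$, the $q$-entropy is $h^q(\Omega)=\limsup_{n\to\infty}\int_\Omega\frac{I(\omega^n)}{n^q}\,d\mu$; $h^q_{AIC}$ and $h^q_Z$ denote it for $I=AIC$ and $I=I_Z$ respectively. *)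

(* Defs.v *)
From HB Require Import structures.
From mathcomp Require Import all_boot all_order all_algebra.
From mathcomp Require Import all_classical all_reals all_analysis.
Set Implicit Arguments. Unset Strict Implicit. Unset Printing Implicit Defensive.
Import Order.TTheory GRing.Theory Num.Theory.
Local Open Scope classical_set_scope.

Inductive prf : Type :=
| PZero : prf
| PSucc : prf
| PProj : nat -> prf                (* v |-> i-th component (0 if absent) *)
| PComp : prf -> list prf -> prf
| PPrim : prf -> prf -> prf
| PMu   : prf -> prf.

Inductive eval : prf -> seq nat -> nat -> Prop :=
| ev_zero v : eval PZero v 0
| ev_succ x v : eval PSucc (x :: v) x.+1
| ev_proj i v : eval (PProj i) v (nth 0 v i)
| ev_comp f gs v ws y : evals gs v ws -> eval f ws y -> eval (PComp f gs) v y
| ev_prim0 f g v y : eval f v y -> eval (PPrim f g) (0 :: v) y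
| ev_primS f g n v r y :
    eval (PPrim f g) (n :: v) r -> eval g (n :: r :: v) y ->
    eval (PPrim f g) (n.+1 :: v) y
| ev_mu f v n :
    eval f (n :: v) 0 ->
    (forall m, m < n -> exists k, eval f (m :: v) k.+1) ->
    eval (PMu f) v n
with evals : seq prf -> seq nat -> seq nat -> Prop :=
| evs_nil v : evals [::] v [::]
| evs_cons g gs v w ws : eval g v w -> evals gs v ws -> evals (g :: gs) v (w :: ws).

(* Objects of countable types (finite strings) are encoded by [pickle]. *)

Definition recursive_fun (X Y : countType) (f : X -> Y) : Prop :=
  exists c : prf, forall x, eval c [:: pickle x] (pickle (f x)).

(* A (partial) computing machine from binary programs to strings over A is
   given by a mu-recursive program; [runs c P s] : machine c on program P
   halts with output s. *)
Definition runs (A : countType) (c : prf) (P : seq bool) (s : seq A) : Prop :=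
  eval c [:: pickle P] (pickle s).

Definition universal_machine (A : countType) (c : prf) : Prop :=
  forall m : prf, exists p : seq bool,
    forall (P : seq bool) (s : seq A), runs c (p ++ P) s <-> runs m P s.

(* Algorithmic information content AIC(s) = min { |P| : C(P) = s }
   (set to 0 if no program outputs s, which cannot happen for universal C). *)
Definition AIC_at (A : countType) (c : prf) (s : seq A) : pred nat :=
  fun n => `[< exists P : seq bool, size P = n /\ runs c P s >].

Definition AIC (A : countType) (c : prf) (s : seq A) : nat :=
  match pselect (exists n, AIC_at c s n) with
  | left h => ex_minn h
  | right _ => 0
  end.

Definition recursive_reversible_coding (A : countType)
    (Z : seq A -> seq bool) : Prop :=
  injective Z /\ recursive_fun Z.

Definition I_Z (A : countType) (Z : seq A -> seq bool) (s : seq A) : nat :=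
  size (Z s).

(* [a0] only serves to make the (nonempty) alphabet a pointed type. *)
Definition seqsp (A : finType) (a0 : A) := nat -> A.

HB.instance Definition _ (A : finType) (a0 : A) :=
  gen_eqMixin (seqsp a0).
HB.instance Definition _ (A : finType) (a0 : A) :=
  gen_choiceMixin (seqsp a0).
HB.instance Definition _ (A : finType) (a0 : A) :=
  isPointed.Build (seqsp a0) (fun _ => a0).

(* Since A is finite
   and discrete, the product topology on A^N has the cylinders as a
   countable base, so the generated sigma-algebra is the Borel one. *)
Definition cylinders (A : finType) (a0 : A) : set (set (seqsp a0)) :=
  [set [set w : seqsp a0 | w na.1 = na.2] | na in [set: nat * A]].

Arguments cylinders {A} a0.
Definition Omega (A : finType) (a0 : A) := g_sigma_algebraType (cylinders a0).

Definition prefix (A : finType) (a0 : A) (w : Omega a0) (n : nat) : seq A :=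
  mkseq w n.

Definition q_entropy (R : realType) (A : finType) (a0 : A)
    (mu : probability (Omega a0) R) (I : seq A -> nat) (q : R) : \bar R :=
  limn_esup (fun n => (\int[mu]_w ((I (prefix w n))%:R / (n%:R `^ q))%:E)%E).

(* Main.v *)
Require Import Defs.
From HB Require Import structures.
From mathcomp Require Import all_boot all_order all_algebra.
From mathcomp Require Import all_classical all_reals all_analysis.
From mathcomp Require Import measurable_realfun zify.
Import Order.TTheory GRing.Theory Num.Theory.
Set Implicit Arguments. Unset Strict Implicit. Unset Printing Implicit Defensive.

Definition computes (c : prf) (F : seq nat -> nat) := forall v, Defs.eval c v (F v).

Lemma c_zero : computes PZero (fun _ => 0).
Proof. move=> v; exact: ev_zero. Qed.
Lemma c_proj i : computes (PProj i) (fun v => nth 0 v i).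
Proof. move=> v; exact: ev_proj. Qed.
Lemma c_comp1 f F g G : computes f F -> computes g G ->
  computes (PComp f [:: g]) (fun v => F [:: G v]).
Proof. move=> hf hg v; apply: ev_comp (hf _); apply: evs_cons => //; exact: evs_nil. Qed.
Lemma c_comp2 f F g G h H : computes f F -> computes g G -> computes h H ->
  computes (PComp f [:: g; h]) (fun v => F [:: G v; H v]).
Proof. move=> hf hg hh v; apply: ev_comp (hf _); do 2 apply: evs_cons => //; exact: evs_nil. Qed.
Lemma c_comp3 f F g G h H k K : computes f F -> computes g G -> computes h H -> computes k K ->
  computes (PComp f [:: g; h; k]) (fun v => F [:: G v; H v; K v]).
Proof. move=> hf hg hh hk v; apply: ev_comp (hf _); do 3 apply: evs_cons => //; exact: evs_nil. Qed.

Definition succ g := PComp PSucc [:: g].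
Lemma c_succ g G : computes g G -> computes (succ g) (fun v => (G v).+1).
Proof. move=> hg v; apply: ev_comp (ev_succ _ _); apply: evs_cons => //; exact: evs_nil. Qed.

Fixpoint primrec (F G : seq nat -> nat) n w :=
  if n is n'.+1 then G [:: n', primrec F G n' w & w] else F w.

Lemma ev_prim f F g G : computes f F -> computes g G ->
  forall n w, Defs.eval (PPrim f g) (n :: w) (primrec F G n w).
Proof.
move=> hf hg; elim=> [|n IH] w /=; first exact: ev_prim0.
exact: ev_primS (IH w) (hg _).
Qed.

Lemma c_prim f F g G a A b B : computes f F -> computes g G -> computes a A -> computes b B ->
  computes (PComp (PPrim f g) [:: a; b]) (fun v => primrec F G (A v) [:: B v]).
Proof.
move=> hf hg ha hb v; apply: ev_comp (ev_prim hf hg _ _).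
do 2 apply: evs_cons => //; exact: evs_nil.
Qed.

Lemma ev_mu' f F v n : computes f F -> F (n :: v) = 0 ->
  (forall m, m < n -> F (m :: v) != 0) -> Defs.eval (PMu f) v n.
Proof.
move=> hf h0 hm; apply: ev_mu; first by rewrite -h0.
move=> m /hm; case E: (F (m :: v)) => [|k] // _; exists k; rewrite -E; exact: hf.
Qed.

Fixpoint cst k := if k is k'.+1 then succ (cst k') else PZero.
Lemma c_cst k : computes (cst k) (fun _ => k).
Proof. elim: k => [|k IH] /=; [exact: c_zero | exact: c_succ]. Qed.

Definition ADD := PPrim (PProj 0) (succ (PProj 1)).
Definition addp a b := PComp ADD [:: a; b].
Lemma c_add a A b B : computes a A -> computes b B -> computes (addp a b) (fun v => A v + B v).
Proof.
move=> ha hb v; have := c_prim (c_proj 0) (c_succ (c_proj 1)) ha hb v.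
suff -> : forall n m, primrec (fun v => nth 0 v 0) (fun v => (nth 0 v 1).+1) n [:: m] = n + m by [].
by move=> n m; elim: n => //= n ->.
Qed.

Definition PRED := PPrim PZero (PProj 0).
Definition SUB := PPrim (PProj 0) (PComp PRED [:: PProj 1; PZero]).
Definition subp a b := PComp SUB [:: b; a].
Lemma c_sub a A b B : computes a A -> computes b B -> computes (subp a b) (fun v => A v - B v).
Proof.
move=> ha hb v.
have hp : computes (PComp PRED [:: PProj 1; PZero]) (fun v => (nth 0 v 1).-1).
  move=> w; have := c_prim c_zero (c_proj 0) (c_proj 1) c_zero w.
  by case: (nth 0 w 1).
have := c_prim (c_proj 0) hp hb ha v.
suff -> : forall n m, primrec (fun v => nth 0 v 0) (fun v => (nth 0 v 1).-1) n [:: m] = m - n by [].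
by move=> n m; elim: n => //= [|n ->]; rewrite ?subn0 ?subnS.
Qed.

Definition MUL := PPrim PZero (addp (PProj 1) (PProj 2)).
Definition mulp a b := PComp MUL [:: a; b].
Lemma c_mul a A b B : computes a A -> computes b B -> computes (mulp a b) (fun v => A v * B v).
Proof.
move=> ha hb v; have := c_prim c_zero (c_add (c_proj 1) (c_proj 2)) ha hb v.
suff -> : forall n m, primrec (fun _ => 0) (fun v => nth 0 v 1 + nth 0 v 2) n [:: m] = n * m by [].
by move=> n m; elim: n => //= n ->; rewrite mulSn addnC.
Qed.

Definition eqp a b := subp (cst 1) (addp (subp a b) (subp b a)).
Lemma c_eqp a A b B : computes a A -> computes b B -> computes (eqp a b) (fun v => nat_of_bool (A v == B v)).
Proof.
move=> ha hb v; have := c_sub (c_cst 1) (c_add (c_sub ha hb) (c_sub hb ha)) v.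
case: eqP => [->|/eqP ne]; first by rewrite subnn.
have -> : 1 - (A v - B v + (B v - A v)) = 0 by lia.
done.
Qed.

(* division: primrec on n with param d : divp (n+1) = divp n + ((divp n + 1) * d == n+1) *)
Definition DIV := PPrim PZero (addp (PProj 1) (eqp (mulp (succ (PProj 1)) (PProj 2)) (succ (PProj 0)))).
Definition divp a b := PComp DIV [:: a; b].
Lemma c_div a A b B : computes a A -> computes b B -> (forall v, 0 < B v) ->
  computes (divp a b) (fun v => A v %/ B v).
Proof.
move=> ha hb hpos v.
have := c_prim c_zero (c_add (c_proj 1) (c_eqp (c_mul (c_succ (c_proj 1)) (c_proj 2)) (c_succ (c_proj 0)))) ha hb v.
suff -> : forall n d, 0 < d -> primrec (fun _ => 0)
   (fun v => nth 0 v 1 + nat_of_bool ((nth 0 v 1).+1 * nth 0 v 2 == (nth 0 v 0).+1)) n [:: d] = n %/ d by [].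
move=> n d d0; elim: n => [|n /= ->]; first by rewrite div0n.
rewrite divnS // addnC; congr (_ + _); congr nat_of_bool.
have h1 := ltn_ceil n d0.
rewrite /dvdn; apply/idP/idP.
- move=> /eqP e. by rewrite -e modnMl.
- move/eqP => hm. have e := divn_eq n.+1 d. rewrite hm addn0 in e.
  have h2 : n.+1 %/ d = (n %/ d).+1.
    have h3 := leq_trunc_div n d. have : n %/ d * d < n.+1 %/ d * d by lia.
    rewrite ltn_pmul2r // => h4.
    have : n.+1 %/ d * d <= (n %/ d).+1 * d by lia.
    rewrite leq_pmul2r // => h5; lia.
  by rewrite -h2 -e.
Qed.

Fixpoint sumP (S : seq nat) (body : nat -> prf) : prf :=
  if S is a :: S' then addp (body a) (sumP S' body) else PZero.
Lemma c_sumP S body B : (forall a, computes (body a) (B a)) ->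
  computes (sumP S body) (fun v => \sum_(a <- S) B a v).
Proof.
move=> hb; elim: S => [|a S IH] /=.
  by move=> v; rewrite big_nil; exact: c_zero.
move=> v; rewrite big_cons; exact: (c_add (hb a) IH).
Qed.

Definition matchb a x := x %% 2 ^ a.+1 == 2 ^ a.
Definition matchP a := eqp (PProj 0) (addp (mulp (divp (PProj 0) (cst (2^a.+1))) (cst (2^a.+1))) (cst (2^a))).
Lemma c_match a : computes (matchP a) (fun v => nat_of_bool (matchb a (nth 0 v 0))).
Proof.
move=> v; have := c_eqp (c_proj 0) (c_add (c_mul (c_div (c_proj 0) (c_cst (2^a.+1)) (fun _ => expn_gt0 2 a.+1)) (c_cst (2^a.+1))) (c_cst (2^a))) v.
rewrite /matchb; set x := nth 0 v 0.
have E : (x == x %/ 2^a.+1 * 2^a.+1 + 2^a) = (x %% 2^a.+1 == 2^a).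
  by rewrite [X in X == _](divn_eq x (2^a.+1)) eqn_add2l.
by rewrite E.
Qed.

Definition stepS (S : seq nat) x :=
  \sum_(a <- S) nat_of_bool (matchb a x) * (x %/ 2 ^ a.+1) +
  x * (1 - \sum_(a <- S) nat_of_bool (matchb a x)).
Definition STEP S := addp (sumP S (fun a => mulp (matchP a) (divp (PProj 0) (cst (2^a.+1)))))
   (mulp (PProj 0) (subp (cst 1) (sumP S matchP))).
Lemma c_step S : computes (STEP S) (fun v => stepS S (nth 0 v 0)).
Proof.
apply: (c_add (c_sumP _ (fun a => c_mul (c_match a) (c_div (c_proj 0) (c_cst (2^a.+1)) (fun _ => expn_gt0 2 a.+1))))).
exact: (c_mul (c_proj 0) (c_sub (c_cst 1) (c_sumP _ c_match))).
Qed.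

Lemma odd_repr_inj a b c q : 2^a * (c.*2.+1) = 2^b * (q.*2.+1) -> a = b.
Proof.
move=> /(congr1 (logn 2)).
rewrite !lognM ?expn_gt0 // !pfactorK // !logn_coprime ?addn0 //.
  by rewrite coprime2n /= odd_double.
by rewrite coprime2n /= odd_double.
Qed.

Lemma match_code b a c : matchb b (2^a * c.*2.+1) = (b == a).
Proof.
rewrite /matchb; apply/idP/idP.
- move=> /eqP hm; apply/eqP.
  have e := divn_eq (2^a * c.*2.+1) (2^b.+1); rewrite hm in e.
  apply/esym; apply: (@odd_repr_inj a b c ((2 ^ a * c.*2.+1) %/ 2 ^ b.+1)).
  rewrite {1}e expnS; set u := _ %/ _; set P := 2 ^ b; rewrite -!muln2; nia.
- move=> /eqP ->; rewrite expnSr -muln_modr.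
  by rewrite modn2 /= odd_double muln1.
Qed.

Lemma sum_eq_uniq (S : seq nat) a (f : nat -> nat) : uniq S ->
  \sum_(b <- S) nat_of_bool (b == a) * f b = nat_of_bool (a \in S) * f a.
Proof.
elim: S => [|b S IH] /=; first by rewrite big_nil.
move=> /andP [bS uS]; rewrite big_cons IH // in_cons.
case: (eqVneq b a) => [<-|ne] /=.
  by rewrite (negbTE bS) mul0n addn0.
by rewrite mul0n add0n.
Qed.

Lemma code_cons a l : CodeSeq.code (a :: l) = 2^a * (CodeSeq.code l).*2.+1.
Proof. by []. Qed.

Lemma step_code S a l : uniq S ->
  stepS S (CodeSeq.code (a :: l)) = if a \in S then CodeSeq.code l else CodeSeq.code (a :: l).
Proof.
move=> uS; rewrite /stepS code_cons; set c := CodeSeq.code l.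
under eq_bigr do rewrite match_code.
under [X in _ * (1 - X)]eq_bigr do rewrite match_code -[nat_of_bool _]muln1.
rewrite !(sum_eq_uniq _ _ uS).
have -> : 2 ^ a * c.*2.+1 %/ 2 ^ a.+1 = c.
  by rewrite expnSr divnMl ?expn_gt0 // -muln2 -addn1 divnMDl // divn_small // addn0.
by case: (a \in S) => /=; rewrite ?mul1n ?muln1 ?subnn ?muln0 ?add0n ?subn0 ?mul0n ?addn0.
Qed.

Lemma step0 S : stepS S 0 = 0.
Proof.
rewrite /stepS mul0n addn0; rewrite big1 // => b _; by rewrite div0n muln0.
Qed.

Lemma size_code l : size l <= CodeSeq.code l.
Proof.
elim: l => //= a l IH; rewrite -/(CodeSeq.code l).
have := expn_gt0 2 a; set P := 2 ^ a; set c := CodeSeq.code l; rewrite -muln2; nia.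
Qed.

Lemma code_pos a l : 0 < CodeSeq.code (a :: l).
Proof. by rewrite code_cons muln_gt0 expn_gt0. Qed.

Lemma iter_valid S l k : uniq S -> all (mem S) l -> size l <= k ->
  iter k (stepS S) (CodeSeq.code l) = 0.
Proof.
move=> uS; elim: l k => [|a l IH] k /=.
  by move=> _ _; apply: iter_fix; exact: step0.
move=> /andP [aS al]; case: k => // k lk.
by rewrite iterSr step_code // aS IH.
Qed.

Lemma iter_invalid S l k : uniq S -> iter k (stepS S) (CodeSeq.code l) = 0 -> all (mem S) l.
Proof.
move=> uS; elim: l k => [|a l IH] k //=.
case aS: (a \in S) => /=.
  case: k => [|k]; first by move=> /= h; have := code_pos a l; rewrite code_cons h.
  by rewrite iterSr step_code // aS => /IH.
rewrite iter_fix ?step_code ?aS // => h; have := code_pos a l; by rewrite code_cons h.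
Qed.

Definition esem S n := n * nat_of_bool (iter n (stepS S) n == 0).
Definition EP S := mulp (PProj 0) (eqp (PComp (PPrim (PProj 0) (PComp (STEP S) [:: PProj 1])) [:: PProj 0; PProj 0]) PZero).
Lemma c_EP S : computes (EP S) (fun v => esem S (nth 0 v 0)).
Proof.
move=> v; have := c_mul (c_proj 0) (c_eqp (c_prim (c_proj 0) (c_comp1 (c_step S) (c_proj 1)) (c_proj 0) (c_proj 0)) c_zero) v.
suff -> : forall n x, primrec (fun v => nth 0 v 0) (fun v => stepS S (nth 0 [:: nth 0 v 1] 0)) n [:: x] = iter n (stepS S) x by [].
by move=> n x; elim: n => //= n ->.
Qed.

Section Inverse.
Variable A : finType.
Definition Sp : seq nat := [seq pickle a | a <- enum A].
Lemma Sp_uniq : uniq Sp.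
Proof. rewrite map_inj_uniq ?enum_uniq //; exact: pickle_inj. Qed.

Definition xof (n : nat) : seq A := odflt [::] (unpickle n).

Lemma pickle_seqE (s : seq A) : pickle s = CodeSeq.code (map pickle s).
Proof. by []. Qed.

Lemma esem_id (s : seq A) : esem Sp (pickle s) = pickle s.
Proof.
rewrite /esem pickle_seqE iter_valid ?Sp_uniq ?muln1 //.
- apply/allP => j /mapP [a _ ->]; apply: map_f; by rewrite mem_enum.
- by have := size_code (map pickle s); rewrite size_map.
Qed.

Lemma esem_pickle n : pickle (xof (esem Sp n)) = esem Sp n.
Proof.
rewrite /esem; case: eqP => h; last first.
  by rewrite muln0 /xof.
rewrite muln1.
have hall := iter_invalid Sp_uniq (etrans (congr1 _ (CodeSeq.decodeK n)) h).
have e : map pickle (pmap (@unpickle A) (CodeSeq.decode n)) = CodeSeq.decode n.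
  elim: (CodeSeq.decode n) hall => //= j l IH /andP [hj hl].
  move: hj => /mapP [a _ ->]; rewrite pickleK /= IH //.
by rewrite /xof -[in unpickle n](CodeSeq.decodeK n) -e -pickle_seqE pickleK /= pickle_seqE e CodeSeq.decodeK.
Qed.
End Inverse.

Section Machine.
Variable A : finType.
Variable Z : seq A -> seq bool.
Hypothesis Zinj : injective Z.
Variable cZ : prf.
Hypothesis hZ : forall x : seq A, Defs.eval cZ [:: pickle x] (pickle (Z x)).

Definition ZE := PComp cZ [:: EP (Sp A)].
Lemma c_ZE : computes ZE (fun v => pickle (Z (xof A (esem (Sp A) (nth 0 v 0))))).
Proof.
move=> v; apply: ev_comp (hZ _).
apply: evs_cons; last exact: evs_nil.
rewrite esem_pickle; exact: c_EP.
Qed.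

Definition GP := subp (cst 1) (eqp ZE (PProj 1)).
Definition MP := PComp (EP (Sp A)) [:: PMu GP].

Lemma MP_inv (s : seq A) : runs MP (Z s) s.
Proof.
rewrite /runs /MP.
have hG := c_sub (c_cst 1) (c_eqp c_ZE (c_proj 1)).
pose Q k := pickle (Z (xof A (esem (Sp A) k))) == pickle (Z s).
have exQ : exists k, Q k by exists (pickle s); rewrite /Q esem_id /xof pickleK.
case: (ex_minnP exQ) => n0 Qn0 minn0.
have xs : xof A (esem (Sp A) n0) = s.
  by move: Qn0 => /eqP /(pcan_inj pickleK) /Zinj.
apply: ev_comp; last first.
  have := c_EP (Sp A) [:: n0]; rewrite /= -esem_pickle xs; exact.
apply: evs_cons; last exact: evs_nil.
apply: (ev_mu' hG) => /=; first by rewrite -/(Q n0) Qn0.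
move=> m lt; apply/negP; rewrite -/(Q m); case Qm: (Q m) => //=.
by have := minn0 _ Qm; rewrite leqNgt lt.
Qed.
End Machine.

Lemma AIC_bound (A : finType) (C : prf) (hC : universal_machine A C)
  (Z : seq A -> seq bool) (hZ : recursive_reversible_coding Z) :
  exists c, forall s, AIC C s <= size (Z s) + c.
Proof.
case: hZ => Zinj [cZ hcZ].
have [p hp] := hC (@MP A cZ).
exists (size p) => s.
have r : runs C (p ++ Z s) s by apply/hp; exact: (MP_inv Zinj hcZ).
rewrite /AIC; case: pselect => [h|no]; last by [].
case: (ex_minnP h) => n _ hmin.
rewrite addnC -size_cat; apply: hmin; apply/asboolP; by exists (p ++ Z s).
Qed.

Section AnaPart.
Local Open Scope classical_set_scope.
Local Open Scope ring_scope.
Section Meas.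
Variables (A : finType) (a0 : A).

Lemma cyl_meas i (x : A) : measurable [set w : Omega a0 | w i = x].
Proof. apply: sub_sigma_algebra; by exists (i, x). Qed.

Lemma prefix_meas n (s : seq A) : measurable [set w : Omega a0 | Defs.prefix w n = s].
Proof.
have [sn|sn] := eqVneq (size s) n; last first.
  have -> : [set w : Omega a0 | Defs.prefix w n = s] = set0.
    apply/seteqP; split => w //= h; move: sn; by rewrite -h /prefix size_mkseq eqxx.
  exact: measurable0.
have -> : [set w : Omega a0 | Defs.prefix w n = s] =
   \bigcap_i (if (i < n)%N then [set w : Omega a0 | w i = nth a0 s i] else setT).
  apply/seteqP; split => w /=.
  - move=> <- i _; case: ifP => // lt; by rewrite /Defs.prefix nth_mkseq.
  - move=> h; apply: (@eq_from_nth _ a0); first by rewrite /Defs.prefix size_mkseq sn.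
    move=> i; rewrite /Defs.prefix size_mkseq => lt; rewrite nth_mkseq //.
    by have := h i I; rewrite lt.
apply: bigcapT_measurable => i; case: ifP => _; [exact: cyl_meas | exact: measurableT].
Qed.

Lemma prefix_fun_meas (R : realType) n (h : seq A -> R) :
  measurable_fun setT (fun w : Omega a0 => h (Defs.prefix w n)).
Proof.
move=> _ Y mY; rewrite setTI.
have -> : (fun w : Omega a0 => h (Defs.prefix w n)) @^-1` Y =
  \bigcup_(k in setT) (if `[< Y (h (xof A k)) >] then [set w : Omega a0 | Defs.prefix w n = xof A k] else set0).
  apply/seteqP; split => w /=.
  - move=> hY; exists (pickle (Defs.prefix w n)) => //.
    by rewrite /xof pickleK /=; move/asboolP: hY => ->.
  - move=> [k _]; case: asboolP => // hY /= e; by rewrite e.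
apply: bigcup_measurable => k _; case: asboolP => _; [exact: prefix_meas|exact: measurable0].
Qed.
End Meas.


Section Limsup.
Local Open Scope ereal_scope.
Lemma limsup_le (R : realType) (u v : (\bar R)^nat) (c : R^nat) :
  (forall e : R, (0 < e)%R -> exists N, forall n, (N <= n)%N -> (c n <= e)%R) ->
  (forall n, u n <= v n + (c n)%:E) -> limn_esup u <= limn_esup v.
Proof.
move=> hc huv; apply/lee_addgt0Pr => e e0.
have [N hN] := hc e e0.
have h1 : forall n, (N <= n)%N -> limn_esup u <= esups v n + e%:E.
  move=> n Nn; rewrite limn_esup_lim.
  apply: (@le_trans _ _ (esups u n)).
    apply: lime_le; first exact: is_cvg_esups.
    by exists n => // m /= nm; apply: nonincreasing_esups.
  apply: ge_ereal_sup => _ [k /= nk <-].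
  apply: (le_trans (huv k)); apply: leeD.
    by apply: ereal_sup_ubound; exists k.
  by rewrite lee_fin; apply: hN; exact: leq_trans nk.
rewrite -leeBlDr // [limn_esup v]limn_esup_lim.
apply: lime_ge; first exact: is_cvg_esups.
exists N => // n Nn; have := h1 n Nn; by rewrite -leeBlDr.
Qed.
End Limsup.

Lemma vanish (R : realType) (K q : R) : (0 < K)%R -> (0 < q)%R ->
  forall e : R, (0 < e)%R -> exists N, forall n, (N <= n)%N -> (K / (n%:R `^ q) <= e)%R.
Proof.
move=> K0 q0 e e0.
set t := (K / e) `^ (q^-1).
have t0 : (0 <= t)%R by exact: powR_ge0.
exists (Num.bound t) => n Nn.
have tn : (t <= n%:R)%R.
  apply: (le_trans (ltW (archi_boundP t0))); by rewrite ler_nat.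
have Ke0 : (0 < K / e)%R by rewrite divr_gt0.
have htq : (t `^ q = K / e)%R.
  by rewrite /t -powRrM mulVf ?gt_eqF // powRr1 // ltW.
have hle : (K / e <= n%:R `^ q)%R.
  rewrite -htq; apply: ge0_ler_powR => //; rewrite ?nnegrE // ?ltW //; exact: le_trans tn.
have np : (0 < n%:R `^ q)%R by exact: lt_le_trans hle.
rewrite ler_pdivrMr // mulrC; apply: le_trans (ler_wpM2r (ltW e0) hle); by rewrite divfK ?gt_eqF.
Qed.

End AnaPart.

Unset Implicit Arguments.
Local Open Scope ring_scope.

Theorem theorem5p2 (R : realType) (A : finType) (a0 : A)
    (mu : probability (Omega a0) R)
    (C : prf) (hC : universal_machine A C)
    (Z : seq A -> seq bool) (hZ : recursive_reversible_coding Z)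
    (q : R) (hq : 0 < q) :
  (q_entropy mu (AIC C) q <= q_entropy mu (I_Z Z) q)%E.
Proof.
have [c hc] := AIC_bound hC hZ.
set K : R := (c.+1)%:R.
have K0 : 0 < K by rewrite ltr0n.
apply: (@limsup_le R _ _ (fun n => K / n%:R `^ q)); first exact: vanish.
move=> n; set d := n%:R `^ q.
have d0 : 0 <= d^-1 by rewrite invr_ge0 powR_ge0.
have mf : forall h : seq A -> R, measurable_fun [set: Omega a0] (EFin \o (fun w : Omega a0 => h (Defs.prefix w n))).
  by move=> h; apply/measurable_EFinP; exact: prefix_fun_meas.
apply: (@le_trans _ _ (\int[mu]_w ((I_Z Z (Defs.prefix w n))%:R / d + K / d)%:E)%E).
  apply: ge0_le_integral => //.
  - by move=> w _; rewrite lee_fin divr_ge0 ?powR_ge0.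
  - exact: (mf (fun s => (AIC C s)%:R / d)).
  - exact: (mf (fun s => (I_Z Z s)%:R / d + K / d)).
  - move=> w _; rewrite lee_fin -mulrDl ler_wpM2r // -natrD ler_nat.
    by rewrite /I_Z addnS -addSn (leq_trans (hc _)) // addnS.
under eq_integral do rewrite EFinD.
rewrite ge0_integralD //.
- rewrite integral_cst // [X in (_ * X)%E](_ : _ = 1%E) ?mule1 //; exact: probability_setT.
- by move=> w _; rewrite lee_fin divr_ge0 ?powR_ge0.
- exact: (mf (fun s => (I_Z Z s)%:R / d)).
- by move=> w _; rewrite lee_fin divr_ge0 ?powR_ge0 // ltW.
Qed.
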